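(* Let $n\geq 3$ be an integer and let $G$ be a finite group with $n$ elements and identity $1$. Let $X_G$ be the Cayley graph of $G\times G$ with respect to the subset $\{(s,1),(1,s),(s,s): s\in G,\ s\neq 1\}$. Then: (i) $X_G$ is strongly regular with parameters $(n^2,\,3n-3,\,n,\,6)$, i.e. it has $n^2$ vertices, is regular of degree $3n-3$, any two adjacent vertices have exactly $n$ common neighbours, and any two distinct non-adjacent vertices have exactly $6$ common neighbours; (ii) the number of elements of order $2$ in $G$ is a graph invariant of $X_G$: if $G$ and $H$ are groups with $n$ elements and $X_G$ is isomorphic to $X_H$ as graphs, then $G$ and $H$ have the same number of elements of order $2$.
   Context: For a finite group $\Gamma$ and a subset $S\subseteq\Gamma$ that does not contain the identity, is closed under inverses, and generates $\Gamma$, the Cayley graph of $\Gamma$ with respect to $S$ has vertex set $\Gamma$ and an edge between $g$ and $h$ whenever $g^{-1}h\in S$. A regular graph is strongly regular if it is not complete and there are non-negative integers $a,c$ such that any two adjacent vertices have exactly $a$ common neighbours and any two distinct non-adjacent vertices have exactly $c$ common neighbours. *)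

(* Defs.v *)
From mathcomp Require Import all_boot all_fingroup.
Set Implicit Arguments. Unset Strict Implicit. Unset Printing Implicit Defensive.
Local Open Scope group_scope.

Definition cayley (T : finGroupType) (S : {set T}) : rel T :=
  fun g h => g^-1 * h \in S.

Definition srg (V : finType) (e : rel V) (v k a c : nat) : Prop :=
  [/\ #|V| = v,
      (exists x y, x != y /\ ~~ e x y),
      (forall x, #|[set y | e x y]| = k),
      (forall x y, e x y -> #|[set z | e x z && e y z]| = a) &
      (forall x y, x != y -> ~~ e x y -> #|[set z | e x z && e y z]| = c)].

(* The connection set {(s,1),(1,s),(s,s) : s <> 1} of G x G, using the
   direct product group structure on (gT * gT) from gproduct.v. *)
Definition XS (gT : finGroupType) : {set (gT * gT)%type} :=
  [set (s, 1) | s in [set~ (1 : gT)]] :|: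
  [set (1, s) | s in [set~ (1 : gT)]] :|:
  [set (s, s) | s in [set~ (1 : gT)]].

Definition XG (gT : finGroupType) : rel (gT * gT)%type := cayley (XS gT).

Definition graph_iso (V W : finType) (e : rel V) (f : rel W) : Prop :=
  exists phi : V -> W, bijective phi /\ forall x y, e x y = f (phi x) (phi y).

Definition n_invol (gT : finGroupType) : nat := #|[set x : gT | #[x] == 2]|.

Arguments XS gT : clear implicits.
Arguments XG gT : clear implicits.
Arguments n_invol gT : clear implicits.

(* Main.v *)
Require Import Defs.
From mathcomp Require Import all_boot all_fingroup.
From mathcomp Require Import cyclic zify.
Set Implicit Arguments. Unset Strict Implicit. Unset Printing Implicit Defensive.
Local Open Scope group_scope.
Section S. Variable gT : finGroupType.
Implicit Types a b s : gT.
Lemma memA a b : ((a,b) \in [set (s, 1) | s in [set~ (1 : gT)]]) = (b == 1) && (a != 1).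
Proof.
apply/imsetP/andP => [[s]|[/eqP-> ?]]; last by exists a; rewrite // !inE.
by rewrite !inE => ? [-> ->].
Qed.
Lemma memB a b : ((a,b) \in [set (1, s) | s in [set~ (1 : gT)]]) = (a == 1) && (b != 1).
Proof.
apply/imsetP/andP => [[s]|[/eqP-> ?]]; last by exists b; rewrite // !inE.
by rewrite !inE => ? [-> ->].
Qed.
Lemma memC a b : ((a,b) \in [set (s, s) | s in [set~ (1 : gT)]]) = (a == b) && (a != 1).
Proof.
apply/imsetP/andP => [[s]|[/eqP-> ?]]; last by exists b; rewrite // !inE.
by rewrite !inE => ? [-> ->].
Qed.
Lemma memXS a b : ((a,b) \in XS gT) = [|| (b == 1) && (a != 1), (a == 1) && (b != 1) | (a == b) && (a != 1)].
Proof. by rewrite /XS !inE memA memB memC orbA. Qed.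
Lemma XGE (x y : gT * gT) : XG gT x y = ((x.1^-1 * y.1, x.2^-1 * y.2) \in XS gT).
Proof. by case: x y => [? ?] [? ?]. Qed.
Lemma XG_mul (x y z : gT * gT) : XG gT (x * y) (x * z) = XG gT y z.
Proof. by rewrite /XG /cayley invMg -mulgA mulKg. Qed.
Lemma XG1 (z : gT * gT) : XG gT 1 z = (z \in XS gT).
Proof. by rewrite /XG /cayley invg1 mul1g. Qed.
Lemma order2P (u : gT) : (#[u] == 2) = (u != 1) && (u * u == 1).
Proof.
apply/idP/andP => [/eqP h|[h1 h2]].
  split; first by rewrite -order_eq1 h.
  by have := expg_order u; rewrite h expgS expg1 => ->.

apply/eqP/prime_nt_dvdP => //; first by rewrite order_eq1.
by rewrite order_dvdn; exact: h2.
Qed.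
Lemma mulV_eq1 a b : (a^-1 * b == 1) = (a == b).
Proof. by rewrite -eq_invg_mul invgK. Qed.
Lemma invg_eqs a b : (a^-1 == b) = (a == b^-1).
Proof. by rewrite -(inj_eq invg_inj) invgK. Qed.

Lemma mulIeq a b : (a * b == b) = (a == 1).
Proof. by rewrite -{2}(mul1g b) (inj_eq (mulIg b)). Qed.
Lemma mulKeq a b : (a * b == a) = (b == 1).
Proof. by rewrite -{2}(mulg1 a) (inj_eq (mulgI a)). Qed.

Definition emb (k : nat) (s : gT) : gT * gT :=
  match k with 0 => (s, 1) | 1 => (1, s) | _ => (s, s) end.

Lemma emb_inS k s : s != 1 -> emb k s \in XS gT.
Proof. by case: k => [|[|k]] hs; rewrite memXS ?eqxx ?hs ?orbT. Qed.

Lemma emb_adj k k' s s' : k < 3 -> k' < 3 -> s != 1 -> s' != 1 ->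
  XG gT (emb k s) (emb k' s') =
  if k == k' then s != s' else if (k + k' == 1)%N then s == s'^-1 else s == s'.
Proof.
move=> hk hk' hs hs'.
case: k hk => [|[|[|//]]] _; case: k' hk' => [|[|[|//]]] _;
  rewrite XGE /= memXS ?invg1 ?mulg1 ?mul1g ?mulV_eq1 ?eqxx ?invg_eq1 ?hs ?hs' /= ?andbT ?andbF ?orbF //=;
  rewrite ?(negbTE hs) ?(negbTE hs') ?mulIeq ?mulKeq ?[s' == _ * _]eq_sym ?[s^-1 == _ * _]eq_sym ?mulKeq ?mulIeq ?invg_eq1 ?(negbTE hs) ?(negbTE hs') /= ?andbF ?orbF //.
- by case: eqP.
- exact: invg_eqs.
- by rewrite eq_sym invg_eqs.
- by case: eqP.
Qed.
Lemma imA (A : {set gT}) a b : ((a,b) \in [set (s, 1) | s in A]) = (b == 1) && (a \in A).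
Proof.
apply/imsetP/andP => [[s]|[/eqP-> ?]]; last by exists a.
by move=> ? [-> ->].
Qed.
Lemma imB (A : {set gT}) a b : ((a,b) \in [set (1, s) | s in A]) = (a == 1) && (b \in A).
Proof.
apply/imsetP/andP => [[s]|[/eqP-> ?]]; last by exists b.
by move=> ? [-> ->].
Qed.
Lemma imC (A : {set gT}) a b : ((a,b) \in [set (s, s) | s in A]) = (a == b) && (a \in A).
Proof.
apply/imsetP/andP => [[s]|[/eqP-> ?]]; last by exists b.
by move=> ? [-> ->].
Qed.

Lemma card_disj (T : finType) (A B : {set T}) :
  [disjoint A & B] -> #|A :|: B| = #|A| + #|B|.
Proof. by move=> h; apply/eqP; rewrite (leq_card_setU A B).2. Qed.

Lemma disjP (T : finType) (A B : {set T}) :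
  (forall x, x \in A -> x \in B -> False) -> [disjoint A & B].
Proof.
move=> h; rewrite disjoints_subset; apply/subsetP => x hA; rewrite inE.
by apply/negP => hB; exact: (h x hA hB).
Qed.

Lemma card_S_pred (P : pred (gT * gT)) :
  #|[set z in XS gT | P z]| =
  #|[set s | (s != 1) && P (s, 1)]| + #|[set s | (s != 1) && P (1, s)]|
  + #|[set s | (s != 1) && P (s, s)]|.
Proof.
set SA := [set s | _ && P (s, 1)]; set SB := [set s | _ && P (1, s)];
set SC := [set s | _ && P (s, s)].
have -> : [set z in XS gT | P z] =
  [set (s, 1) | s in SA] :|: [set (1, s) | s in SB] :|: [set (s, s) | s in SC].
  apply/setP => -[a b]; rewrite !inE !imA !imB !imC !inE.
  have [<-|hab] := eqVneq a b; have [->|ha] := eqVneq a 1;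
    rewrite /= ?eqxx ?andbT ?andbF ?orbF ?andbT //=.
  have [->|hb] := eqVneq b 1; rewrite /= ?andbT ?andbF ?orbF //=.

rewrite !card_disj.
- rewrite !card_imset //; by move=> x y [].
- apply: disjP => -[a b]; rewrite imA imB => /andP[/eqP-> H] /andP[/eqP E].
  by move: H; rewrite !inE E eqxx.
- apply: disjP => -[a b]; rewrite inE imA imB imC => /orP[] /andP[/eqP E H] /andP[/eqP E' H'];
  move: H H'; rewrite !inE ?E ?E' ?eqxx //.
  by move: E'; rewrite E => <-; rewrite eqxx.
Qed.
Lemma card_transl (x : gT * gT) (P : pred (gT * gT)) :
  #|[set w | P w]| = #|[set z | P (x * z)]|.
Proof.
rewrite -[RHS](card_imset _ (mulgI x)); apply: eq_card => w; rewrite inE.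
apply/idP/imsetP => [h|[z]]; last by rewrite inE => h ->.
by exists (x^-1 * w); rewrite ?inE mulKVg.
Qed.
Lemma XG_l (x z : gT * gT) : XG gT x (x * z) = (z \in XS gT).
Proof. by rewrite /XG /cayley mulKg. Qed.
Lemma XG_r (x y z : gT * gT) : XG gT y (x * z) = XG gT (x^-1 * y) z.
Proof. by rewrite /XG /cayley invMg invgK mulgA. Qed.

Lemma card_common (x y : gT * gT) :
  #|[set z | XG gT x z && XG gT y z]| = #|[set z in XS gT | XG gT (x^-1 * y) z]|.
Proof.
rewrite (card_transl x); apply: eq_card => z; rewrite [LHS]in_set [RHS]in_set XG_l XG_r //.
Qed.
Lemma card_nbr (x : gT * gT) : #|[set z | XG gT x z]| = #|XS gT|.
Proof.
rewrite (card_transl x); apply: eq_card => z; rewrite [LHS]in_set XG_l //.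
Qed.

Lemma eq_set1 (Q1 Q2 : pred gT) :
  (forall s, s != 1 -> Q1 s = Q2 s) ->
  [set s | (s != 1) && Q1 s] = [set s | (s != 1) && Q2 s].
Proof. by move=> h; apply/setP => s; rewrite !inE; case: eqP => //= /eqP /h. Qed.

Lemma card_XS : #|XS gT| = (3 * #|gT|.-1)%N.
Proof.
have -> : XS gT = [set z in XS gT | (fun _ => true) z] by apply/setP => z; rewrite !inE andbT.
rewrite card_S_pred.
have E : forall Q : gT -> bool, (forall s, Q s) -> #|[set s | (s != 1) && Q s]| = #|gT|.-1.
  move=> Q hQ; rewrite -(cardsC1 (1 : gT)); apply: eq_card => s; rewrite !inE hQ andbT //.
rewrite !E //; lia.
Qed.

Lemma c_neq u : u != 1 -> #|[set s : gT | (s != 1) && (u != s)]|.+2 = #|gT|.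
Proof.
move=> hu.
have -> : [set s : gT | (s != 1) && (u != s)] = [set~ 1] :\ u.
  by apply/setP => s; rewrite !inE andbC eq_sym.
have := cardsD1 u [set~ 1]; rewrite !inE hu cardsC1 /=.
have : 0 < #|gT| by apply/card_gt0P; exists 1.
move=> h0 h; rewrite -[#|gT|](prednK h0) h add1n //.
Qed.
Lemma c_eq u : u != 1 -> #|[set s : gT | (s != 1) && (u == s)]| = 1%N.
Proof.
move=> hu; have -> : [set s : gT | (s != 1) && (u == s)] = [set u].
  by apply/setP => s; rewrite !inE; have [<-|ne] := eqVneq u s; rewrite ?hu ?andbF ?eqxx.
by rewrite cards1.
Qed.
Lemma c_eqinv u : u != 1 -> #|[set s : gT | (s != 1) && (u == s^-1)]| = 1%N.
Proof.
move=> hu; have -> : [set s : gT | (s != 1) && (u == s^-1)] = [set u^-1].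
  apply/setP => s; rewrite !inE -invg_eqs; have [<-|ne] := eqVneq u^-1 s; rewrite ?andbF ?andbT //.
  by rewrite invg_eq1.
by rewrite cards1.
Qed.
Definition cls (v : gT * gT) : nat := if v.2 == 1 then 0%N else if v.1 == 1 then 1%N else 2%N.
Definition vl (v : gT * gT) : gT := if v.2 == 1 then v.1 else v.2.
Lemma S_emb v : v \in XS gT -> [/\ cls v < 3, vl v != 1 & v = emb (cls v) (vl v)].
Proof.
case: v => a b; rewrite memXS /cls /vl /=.
have [->|hb] := eqVneq b 1; rewrite /= ?andbF ?orbF.
  by have [->|ha] := eqVneq a 1.
have [->|ha] := eqVneq a 1; rewrite /= ?andbF ?orbF //=.
by case/andP => /eqP ->.
Qed.

Lemma adj_case v : v \in XS gT -> #|[set z in XS gT | XG gT v z]| = #|gT|.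
Proof.
case/S_emb; set k := cls v; set u := vl v => hk hu ->.
rewrite card_S_pred.
rewrite (eq_set1 (fun s hs => @emb_adj k 0 u s hk isT hu hs)).
rewrite (eq_set1 (fun s hs => @emb_adj k 1 u s hk isT hu hs)).
rewrite (eq_set1 (fun s hs => @emb_adj k 2 u s hk isT hu hs)).
have := c_neq hu.
case: k hk => [|[|[|//]]] _ /=; rewrite ?c_eq ?c_eqinv // => <-.
  all: by rewrite ?addn1 ?add1n.
Qed.

Lemma mulVeq a s c : (a^-1 * s == c) = (s == a * c).
Proof. by rewrite -(inj_eq (mulgI a)) mulKVg. Qed.

Lemma nonadj_case v : v \notin XS gT -> v != 1 -> #|[set z in XS gT | XG gT v z]| = 6.
Proof.
case: v => a b; rewrite memXS => hS h1.
have hb : b != 1.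
  apply: contra hS => /eqP hb; move: h1; rewrite hb /= -pair_eqE /= eqxx andbT => ->.
  by [].
have ha : a != 1.
  apply: contra hS => /eqP ha; move: h1; rewrite ha /= -pair_eqE /= eqxx /= => ->.
  by rewrite orbT.
have hab : a != b.
  by apply: contra hS => /eqP hab; rewrite hab eqxx /= -hab ha !orbT.
rewrite card_S_pred.
have -> : [set s | (s != 1) && XG gT (a, b) (s, 1)] = [set a; a * b^-1].
  apply/setP => s; rewrite !inE XGE /= memXS !mulg1 ?invg_eq1 (negbTE hb) ?mulV_eq1 ?mulVeq /=.
  have [->|hsa] := eqVneq s a; rewrite /= ?ha ?eqxx //=.
  rewrite andbT; have [->|_] := eqVneq s (a * b^-1); rewrite ?andbT ?andbF //.
  by rewrite mulg_eq1 invgK.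
have -> : [set s | (s != 1) && XG gT (a, b) (1, s)] = [set b; b * a^-1].
  apply/setP => s; rewrite !inE XGE /= memXS !mulg1 ?invg_eq1 (negbTE ha) ?mulV_eq1 /= ?andbF ?andbT ?orbF.
  rewrite [a^-1 == _]eq_sym mulVeq.
  have [->|hsb] := eqVneq s b; rewrite /= ?hb ?eqxx ?orbT ?andbT //=.
  have [->|_] := eqVneq s (b * a^-1); rewrite ?andbT ?andbF //.
  by rewrite mulg_eq1 invgK eq_sym.
have -> : [set s | (s != 1) && XG gT (a, b) (s, s)] = [set a; b].
  apply/setP => s; rewrite !inE XGE /= memXS ?mulV_eq1 (inj_eq (mulIg s)) (inj_eq invg_inj) (negbTE hab) /= ?andbF ?orbF.
  have [->|hsa] := eqVneq s a; rewrite ?eqxx ?ha /= ?(negbTE hab) ?andbT ?orbF //.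
    by rewrite andbF eq_sym hab.
  have [E|hsb] := eqVneq s b; last by rewrite andbF.
  by subst s; rewrite hb.
rewrite !cards2.
have -> : (a != a * b^-1) by rewrite eq_sym mulKeq invg_eq1.
have -> : (b != b * a^-1) by rewrite eq_sym mulKeq invg_eq1.
by rewrite hab.
Qed.
Lemma part1 : 3 <= #|gT| -> srg (XG gT) (#|gT| ^ 2) (3 * #|gT| - 3) #|gT| 6.
Proof.
move=> hn; split.
- by rewrite card_prod mulnn.
- have : [set~ (1:gT)] != set0 by rewrite -card_gt0 cardsC1 -ltnS (ltn_predK hn) (ltn_trans _ hn).
  case/set0Pn => a; rewrite !inE => ha.
  have : ~: [set (1:gT); a] != set0.
    rewrite -card_gt0; have := cardsC [set (1:gT); a]; rewrite cards2 eq_sym ha.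
    by move=> h; rewrite -(ltn_add2l 2) addn0 h.
  case/set0Pn => b; rewrite !inE negb_or => /andP[hb1 hba].
  exists 1, (a, b); split.
    by apply/eqP => -[E _]; rewrite -E eqxx in ha.
  by rewrite XG1 memXS (negbTE hb1) /= (negbTE ha) [a == b]eq_sym (negbTE hba).
- by move=> x; rewrite card_nbr card_XS -subn1 mulnBr muln1.
- by move=> x y hxy; rewrite card_common adj_case.
- move=> x y hxy hn'; rewrite card_common nonadj_case //.
  by rewrite -eq_mulVg1.
Qed.
Definition adjc (k : nat) (s : gT) (k' : nat) (s' : gT) : bool :=
  if k == k' then s != s' else if (k + k' == 1)%N then s == s'^-1 else s == s'.

Ltac solve_cl :=
  repeat match goal with H : is_true (_ == _) |- _ => move/eqP: H => H end;
  try subst;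
  repeat match goal with H : (_^-1 = _^-1) |- _ => move/invg_inj: H => H end; try subst;
  try (match goal with H : is_true (?x != ?x) |- _ => by rewrite eqxx in H end);
  repeat match goal with H : context[?x^-1^-1] |- _ => rewrite invgK in H end;
  try (match goal with H : is_true (?x != ?x) |- _ => by rewrite eqxx in H end);
  try (by left);
  try (match goal with H : ?a = ?b |- _ =>
     right; rewrite ?invgK; first [by rewrite H ?invgK | by rewrite -H ?invgK] end).

Lemma classify c0 c1 c2 s0 s1 s2 : c0 < 3 -> c1 < 3 -> c2 < 3 ->
  adjc c0 s0 c1 s1 -> adjc c0 s0 c2 s2 -> adjc c1 s1 c2 s2 ->
  (c0 = c1 /\ c0 = c2) \/ [/\ c0 != c1, c0 != c2, c1 != c2 & [/\ s1 = s0, s2 = s0 & s0^-1 = s0]].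
Proof.
case: c0 => [|[|[|//]]]; case: c1 => [|[|[|//]]]; case: c2 => [|[|[|//]]] => _ _ _;
  rewrite /adjc /= => h01 h02 h12; solve_cl.
Qed.
Lemma emb_inj k k' s s' : k < 3 -> k' < 3 -> s != 1 -> s' != 1 ->
  emb k s = emb k' s' -> k = k' /\ s = s'.
Proof.
case: k => [|[|[|//]]]; case: k' => [|[|[|//]]] => _ _ hs hs' /= /pair_equal_spec [E1 E2];
  subst; first [by split | by rewrite ?eqxx in hs hs'] .
Qed.

Lemma Inv_prop (u : gT) : #[u] == 2 -> u != 1 /\ u^-1 = u.
Proof.
rewrite order2P => /andP[h1 h2]; split => //; apply/eqP.
by rewrite eq_invg_mul.
Qed.

Definition notone : pred gT := fun s => s != 1.
Definition T1 : {set {ffun 'I_3 -> gT * gT}} :=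
  [set f : {ffun 'I_3 -> gT * gT} | [forall i, XG gT 1 (f i)] && [forall i, forall j, (i != j) ==> XG gT (f i) (f j)]].
Definition Inj : {set {ffun 'I_3 -> gT}} := [set h : {ffun 'I_3 -> gT} in ffun_on notone | injectiveb h].
Definition Inj3 : {set {ffun 'I_3 -> 'I_3}} := [set g : {ffun 'I_3 -> 'I_3} | injectiveb g].
Definition Inv : {set gT} := [set u | #[u] == 2].
Definition FS (p : 'I_3 * {ffun 'I_3 -> gT}) : {ffun 'I_3 -> gT * gT} :=
  [ffun i => emb p.1 (p.2 i)].
Definition FM (p : gT * {ffun 'I_3 -> 'I_3}) : {ffun 'I_3 -> gT * gT} :=
  [ffun i => emb (p.2 i) p.1].
Definition TS := FS @: setX [set: 'I_3] Inj.
Definition TM := FM @: setX Inv Inj3.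

Definition i0 : 'I_3 := Ordinal (isT : 0 < 3).
Definition i1 : 'I_3 := Ordinal (isT : 1 < 3).
Definition i2 : 'I_3 := Ordinal (isT : 2 < 3).
Lemma I3P (i : 'I_3) : i = i0 \/ i = i1 \/ i = i2.
Proof.
case: i => [[|[|[|//]]] Hi]; [left | right; left | right; right]; exact: val_inj.
Qed.

Lemma card_Inj3 : #|Inj3| = 6.
Proof. by rewrite /Inj3 card_inj_ffuns !card_ord. Qed.

Lemma card_Inj : #|Inj| = #|gT|.-1 ^_ 3.
Proof.
rewrite /Inj card_inj_ffuns_on card_ord -(cardsC1 (1 : gT)); congr (_ ^_ _).
by apply: eq_card => s; rewrite !inE.
Qed.

Lemma card_TS : #|TS| = (3 * #|Inj|)%N.
Proof.
rewrite /TS card_in_imset ?cardsX ?cardsT ?card_ord //.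
move=> [k h] [k' h']; rewrite !inE /= => /andP[/forallP hon _] /andP[/forallP hon' _] E.
have E' i : emb k (h i) = emb k' (h' i) by move: (congr1 (fun f : {ffun 'I_3 -> gT * gT} => f i) E); rewrite !ffunE.
have [hk _] := emb_inj (ltn_ord k) (ltn_ord k') (hon i0) (hon' i0) (E' i0).
have -> : k = k' by apply: val_inj.
congr (_, _); apply/ffunP => i.
exact: (emb_inj (ltn_ord k) (ltn_ord k') (hon i) (hon' i) (E' i)).2.
Qed.

Lemma card_TM : #|TM| = (#|Inv| * #|Inj3|)%N.
Proof.
rewrite /TM card_in_imset ?cardsX //.
move=> [u g] [u' g']; rewrite !inE /= => /andP[hu _] /andP[hu' _] E.
have E' i : emb (g i) u = emb (g' i) u' by move: (congr1 (fun f : {ffun 'I_3 -> gT * gT} => f i) E); rewrite !ffunE.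
have [h1 _] := Inv_prop hu.
have [h1' _] := Inv_prop hu'.
have [_ ->] := emb_inj (ltn_ord _) (ltn_ord _) h1 h1' (E' i0).
congr (_, _); apply/ffunP => i; apply: val_inj.
exact: (emb_inj (ltn_ord _) (ltn_ord _) h1 h1' (E' i)).1.
Qed.

Lemma disj_TS_TM : [disjoint TS & TM].
Proof.
apply: disjP => f /imsetP [[k h] hkh ->] /imsetP [[u g] hug].
move: hkh hug; rewrite !inE /= => /andP[/forallP hon _] /andP[hu /injectiveP hg] E.
have [h1 _] := Inv_prop hu.
have E' i : emb k (h i) = emb (g i) u by move: (congr1 (fun f : {ffun 'I_3 -> gT * gT} => f i) E); rewrite !ffunE.
have [e0 _] := emb_inj (ltn_ord _) (ltn_ord _) (hon i0) h1 (E' i0).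
have [e1 _] := emb_inj (ltn_ord _) (ltn_ord _) (hon i1) h1 (E' i1).
have : g i0 = g i1 by apply: val_inj; rewrite /= -e0 -e1.
by move/hg.
Qed.
Lemma TS_sub : TS \subset T1.
Proof.
apply/subsetP => f /imsetP [[k h]]; rewrite !inE /= => /andP[/forallP hon /injectiveP hinj] ->.
apply/andP; split; apply/forallP => i; rewrite /FS ?ffunE /=.
  by rewrite XG1; exact: emb_inS (hon i).
apply/forallP => j; apply/implyP => hij; rewrite !ffunE /=.
rewrite emb_adj; [|exact: ltn_ord|exact: ltn_ord|exact: (hon i)|exact: (hon j)].
case: ifP => [_|/eqP //].
by apply: contra hij => /eqP /hinj ->.
Qed.

Lemma TM_sub : TM \subset T1.
Proof.
apply/subsetP => f /imsetP [[u g]]; rewrite !inE /= => /andP[hu /injectiveP hinj] ->.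
have [h1 hinv] := Inv_prop hu.
apply/andP; split; apply/forallP => i; rewrite /FM ?ffunE /=.
  by rewrite XG1; exact: emb_inS.
apply/forallP => j; apply/implyP => hij; rewrite !ffunE /=.
rewrite emb_adj //.
have -> : (g i == g j :> nat) = false.
  by apply/negbTE; apply: contra hij => /eqP /val_inj /hinj ->.
by rewrite hinv eqxx; case: ifP.
Qed.

Lemma T1_sub : T1 \subset TS :|: TM.
Proof.
apply/subsetP => f; rewrite inE => /andP[/forallP hS /forallP hA].
pose c i := cls (f i); pose s i := vl (f i).
have hS' i : f i \in XS gT by rewrite -XG1.
have hc i : c i < 3 by have [] := S_emb (hS' i).
have hs i : s i != 1 by have [] := S_emb (hS' i).
have hf i : f i = emb (c i) (s i) by have [] := S_emb (hS' i).
have hadj i j : i != j -> adjc (c i) (s i) (c j) (s j).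
  move=> hij; have := implyP (forallP (hA i) j) hij; rewrite {1}(hf i) {1}(hf j) emb_adj //.
have := classify (hc i0) (hc i1) (hc i2) (hadj i0 i1 isT) (hadj i0 i2 isT) (hadj i1 i2 isT).
case=> [[e1 e2]|[d01 d02 d12 [e1 e2 einv]]].
- have hcc i : c i = c i0 by case: (I3P i) => [->|[->|->]].
  apply/setUP; left; apply/imsetP.
  exists (inord (c i0), [ffun i => s i]).
    rewrite !inE /=; apply/andP; split; first by apply/forallP => i; rewrite ffunE; exact: hs.
    apply/injectiveP => i j; rewrite !ffunE => E; apply/eqP; apply/negPn/negP => hij.
    by have := hadj i j hij; rewrite /adjc !(hcc i) (hcc j) eqxx E eqxx.
  by apply/ffunP => i; rewrite !ffunE /= inordK // -(hcc i) hf.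
- have hss i : s i = s i0 by case: (I3P i) => [->|[->|->]].
  apply/setUP; right; apply/imsetP.
  exists (s i0, [ffun i => inord (c i) : 'I_3]).
    rewrite !inE /=; apply/andP; split.
      by rewrite order2P hs /= -{1}einv mulVg.
    apply/injectiveP => i j; rewrite !ffunE => /(congr1 val); rewrite /= !inordK // => E.
    move: d01 d02 d12 E; case: (I3P i) => [->|[->|->]]; case: (I3P j) => [->|[->|->]] //; lia.
  by apply/ffunP => i; rewrite /FM !ffunE /= (inordK (hc i)) -(hss i) hf.
Qed.

Lemma T1_card : #|T1| = (3 * #|gT|.-1 ^_ 3 + #|Inv| * 6)%N.
Proof.
have -> : T1 = TS :|: TM.
  by apply/eqP; rewrite eqEsubset T1_sub /= subUset TS_sub TM_sub.
by rewrite card_disj ?disj_TS_TM // card_TS card_TM card_Inj card_Inj3.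
Qed.
End S.

Definition K4set (V : finType) (e : rel V) : {set V * {ffun 'I_3 -> V}} :=
  [set p : V * {ffun 'I_3 -> V} | [forall i, e p.1 (p.2 i)] &&
     [forall i, forall j, (i != j) ==> e (p.2 i) (p.2 j)]].

Lemma iso_le (V W : finType) (e : rel V) (f : rel W) :
  graph_iso e f -> #|K4set e| <= #|K4set f|.
Proof.
case=> phi [bij H].
pose F (p : V * {ffun 'I_3 -> V}) := (phi p.1, [ffun i => phi (p.2 i)]).
have injF : injective F.
  move=> [x g] [y h] [/(bij_inj bij) -> E]; congr (_, _); apply/ffunP => i.
  by apply: (bij_inj bij); move: (congr1 (fun k : {ffun 'I_3 -> W} => k i) E); rewrite !ffunE.
rewrite -(card_imset _ injF); apply: subset_leq_card; apply/subsetP => q /imsetP [[x g]].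
rewrite !inE /= => /andP[/forallP h1 /forallP h2] ->.
apply/andP; split; apply/forallP => i; rewrite /= ?ffunE; first by rewrite -H.
apply/forallP => j; rewrite !ffunE -H; exact: (forallP (h2 i) j).
Qed.

Lemma iso_sym (V W : finType) (e : rel V) (f : rel W) :
  graph_iso e f -> graph_iso f e.
Proof.
case=> phi [[psi c1 c2] H]; exists psi; split; first by exists phi.
by move=> x y; rewrite H !c2.
Qed.

Lemma K4_card (gT : finGroupType) :
  #|K4set (XG gT)| = (#|gT| * #|gT| * #|T1 gT|)%N.
Proof.
pose F (p : (gT * gT) * {ffun 'I_3 -> gT * gT}) := (p.1, [ffun i => p.1 * p.2 i]).
have injF : injective F.
  move=> [x g] [y h] [-> E]; congr (_, _); apply/ffunP => i.
  by apply: (mulgI y); move: (congr1 (fun k : {ffun 'I_3 -> gT * gT} => k i) E); rewrite !ffunE.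
have -> : K4set (XG gT) = F @: setX [set: gT * gT] (T1 gT).
  apply/eqP; rewrite eqEsubset; apply/andP; split; apply/subsetP.
  - move=> [x g]; rewrite !inE /= => /andP[/forallP h1 /forallP h2].
    apply/imsetP; exists (x, [ffun i => x^-1 * g i]).
      rewrite !inE /=; apply/andP; split; apply/forallP => i; rewrite ffunE.
        by rewrite -(XG_mul x) mulg1 mulKVg.
      apply/forallP => j; rewrite ffunE -(XG_mul x) !mulKVg; exact: (forallP (h2 i) j).
    by congr (_, _); apply/ffunP => i; rewrite !ffunE mulKVg.
  - move=> q /imsetP [[x f]]; rewrite !inE /= => /andP[/forallP h1 /forallP h2] ->.
    apply/andP; split; apply/forallP => i; rewrite /= ?ffunE.
      by rewrite -[x in XG _ x _]mulg1 XG_mul.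
    apply/forallP => j; rewrite !ffunE XG_mul; exact: (forallP (h2 i) j).
by rewrite card_imset // cardsX cardsT card_prod.
Qed.

Theorem mainTheorem3 (n : nat) (hn : 3 <= n) :
  (forall gT : finGroupType, #|gT| = n ->
     srg (XG gT) (n ^ 2) (3 * n - 3) n 6) /\
  (forall gT hT : finGroupType, #|gT| = n -> #|hT| = n ->
     graph_iso (XG gT) (XG hT) -> n_invol gT = n_invol hT).
Proof.
split.
  by move=> gT hG; rewrite -hG; apply: part1; rewrite hG.
move=> gT hT hG hH iso.
have le1 := iso_le iso.
have le2 := iso_le (iso_sym iso).
have E : #|K4set (XG gT)| = #|K4set (XG hT)| by apply/eqP; rewrite eqn_leq le1 le2.
move: E; rewrite !K4_card !T1_card hG hH.
have n0 : 0 < n * n by rewrite muln_gt0 andbb (leq_trans _ hn).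
move/eqP; rewrite eqn_pmul2l // eqn_add2l eqn_pmul2r // => /eqP.
by rewrite /n_invol.
Qed.
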